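(* Let $n,m$ be integers with $2\le n\le m$ and $(n,m)\ne(2,4)$. Then $$\gamma^{LD}(K_n\square K_m)-1\le \gamma^{LD}(K_n\times K_m)\le \gamma^{LD}(K_n\square K_m).$$ Moreover, if $\gamma^{LD}(K_n\times K_m)=\gamma^{LD}(K_n\square K_m)-1$, then an optimal (minimum-cardinality) locating-dominating code $C$ in $K_n\times K_m$ has a non-codeword $v$ such that $I(K_n\times K_m, C;v)=C$.
   Context: $K_q$ is the complete graph on vertex set $\{1,\dots,q\}$. The Cartesian product $G_1\square G_2$ has vertex set $V_1\times V_2$, with $(u_1,u_2)$ adjacent to $(v_1,v_2)$ iff ($u_1=v_1$ and $u_2v_2\in E_2$) or ($u_2=v_2$ and $u_1v_1\in E_1$). The direct product $G_1\times G_2$ has vertex set $V_1\times V_2$, with $(u_1,u_2)$ adjacent to $(v_1,v_2)$ iff $u_1v_1\in E_1$ and $u_2v_2\in E_2$. For a graph $G$, a vertex $v$ and a code (nonempty vertex subset) $C$, $I(G,C;v)=N[v]\cap C$ where $N[v]$ is the closed neighbourhood in $G$. A code $C$ is locating-dominating in $G$ if for all distinct non-codewords $u,v$, $I(C;u)\ne\emptyset$ and $I(C;u)\ne I(C;v)$. $\gamma^{LD}(G)$ is the minimum size of a locating-dominating code in $G$. *)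

(* Defs.v *)
From mathcomp Require Import all_boot.
Set Implicit Arguments. Unset Strict Implicit. Unset Printing Implicit Defensive.

Definition Kadj (q : nat) : rel 'I_q := fun u v => u != v.

Definition cartesian (T1 T2 : finType) (e1 : rel T1) (e2 : rel T2)
  : rel (T1 * T2) :=
  fun u v => ((u.1 == v.1) && e2 u.2 v.2) || ((u.2 == v.2) && e1 u.1 v.1).

Definition direct (T1 T2 : finType) (e1 : rel T1) (e2 : rel T2)
  : rel (T1 * T2) :=
  fun u v => e1 u.1 v.1 && e2 u.2 v.2.

Definition closed_nbhd (T : finType) (e : rel T) (v : T) : {set T} :=
  [set u | (u == v) || e v u].

Definition Iset (T : finType) (e : rel T) (C : {set T}) (v : T) : {set T} :=
  closed_nbhd e v :&: C.

Definition is_LD (T : finType) (e : rel T) (C : {set T}) : bool :=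
  [&& C != set0,
      [forall u, (u \notin C) ==> (Iset e C u != set0)] &
      [forall u, forall v,
         [&& u \notin C, v \notin C & u != v] ==> (Iset e C u != Iset e C v)]].

Definition gammaLD (T : finType) (e : rel T) : nat :=
  \big[minn/#|T|]_(C : {set T} | is_LD e C) #|C|.

(* Main.v *)
Require Import Defs.
From mathcomp Require Import all_boot zify.
Set Implicit Arguments. Unset Strict Implicit.


Section Gen.
Variables (T : finType) (e : rel T).

Lemma bigmin_le (I : eqType) (r : seq I) (P : pred I) (F : I -> nat) x0 j :
  j \in r -> P j -> \big[minn/x0]_(i <- r | P i) F i <= F j.
Proof.
elim: r => [|a r IH] //=; rewrite inE big_cons => /orP[/eqP<-|jr] Pj.
  by rewrite Pj geq_minl.
case: (P a); last exact: IH.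
by apply: leq_trans (geq_minr _ _) (IH jr Pj).
Qed.

Lemma bigmin_att (I : eqType) (r : seq I) (P : pred I) (F : I -> nat) x0 :
  \big[minn/x0]_(i <- r | P i) F i = x0 \/
  exists2 j, j \in r & P j /\ \big[minn/x0]_(i <- r | P i) F i = F j.
Proof.
elim: r => [|a r IH]; first by left; rewrite big_nil.
rewrite big_cons; case Pa: (P a); last first.
  case: IH => [->|[j jr [Pj ->]]]; [by left|by right; exists j; rewrite ?inE ?jr ?orbT].
rewrite /minn; case: ifP => _.
  by right; exists a; rewrite ?inE ?eqxx.
case: IH => [->|[j jr [Pj ->]]]; [by left|by right; exists j; rewrite ?inE ?jr ?orbT].
Qed.

Lemma LDP (C : {set T}) : reflect
  [/\ C != set0, forall u, u \notin C -> Iset e C u != set0 &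
      forall u v, u \notin C -> v \notin C -> Iset e C u = Iset e C v -> u = v]
  (is_LD e C).
Proof.
apply: (iffP and3P) => [[H1 /forallP H2 /forallP H3]|[H1 H2 H3]]; split => //.
- by move=> u /(implyP (H2 u)).
- move=> u v uC vC E; apply/eqP; apply/negPn/negP => uv.
  by move: (implyP (forallP (H3 u) v)); rewrite uC vC uv E eqxx => /(_ isT).
- by apply/forallP => u; apply/implyP; apply: H2.
- apply/forallP => u; apply/forallP => v; apply/implyP => /and3P[uC vC uv].
  by apply/negP => /eqP E; move: uv; rewrite (H3 _ _ uC vC E) eqxx.
Qed.

Lemma gamma_le C : is_LD e C -> gammaLD e <= #|C|.
Proof. by move=> H; apply: bigmin_le; rewrite ?mem_index_enum. Qed.

Lemma gamma_att : is_LD e setT -> exists2 C, is_LD e C & #|C| = gammaLD e.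
Proof.
move=> HT; case: (bigmin_att (index_enum _) (is_LD e) (fun C : {set T} => #|C|) #|T|).
  by rewrite /gammaLD => ->; exists setT; rewrite ?cardsT.
by move=> [C _ [HC E]]; exists C; rewrite // /gammaLD E.
Qed.

Lemma gamma_pos : is_LD e setT -> 0 < gammaLD e.
Proof.
move=> /gamma_att[C /LDP[C0 _ _] <-]; by rewrite card_gt0.
Qed.
End Gen.


Lemma ordE k (x y : 'I_k) : (x == y) = (nat_of_ord x == nat_of_ord y).
Proof. by []. Qed.

Section S.
Variables n m : nat.
Local Notation V := ('I_n * 'I_m)%type.
Local Notation KC := (cartesian (@Kadj n) (@Kadj m)).
Local Notation KD := (direct (@Kadj n) (@Kadj m)).

Lemma mem_Nc (u x : V) : (x \in closed_nbhd KC u) = (x.1 == u.1) || (x.2 == u.2).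
Proof.
case: u x => [u1 u2] [x1 x2]; rewrite /closed_nbhd /cartesian /Kadj inE xpair_eqE /=.
by rewrite !ordE; lia.
Qed.

Lemma mem_Nd (u x : V) : (x \in closed_nbhd KD u) =
   ((x.1 == u.1) && (x.2 == u.2)) || ((x.1 != u.1) && (x.2 != u.2)).
Proof.
case: u x => [u1 u2] [x1 x2]; rewrite /closed_nbhd /direct /Kadj inE xpair_eqE /=.
by rewrite !ordE; lia.
Qed.

Lemma IsetD (C : {set V}) u : u \notin C -> Iset KD C u = C :\: Iset KC C u.
Proof.
move=> uC; apply/setP => x; rewrite /Iset in_setD !in_setI mem_Nd mem_Nc.
case xC: (x \in C); rewrite ?andbF ?andbT //.
have : x != u by apply: contraNneq uC => <-.
case: x u {xC uC} => [x1 x2] [u1 u2]; rewrite xpair_eqE /= !ordE; lia.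
Qed.

Lemma IsetC_sub (C : {set V}) u : Iset KC C u \subset C.
Proof. by apply/subsetP => x; rewrite inE => /andP[]. Qed.

Lemma sepDC (C : {set V}) u w : u \notin C -> w \notin C ->
  (Iset KD C u = Iset KD C w) <-> (Iset KC C u = Iset KC C w).
Proof.
move=> uC wC; rewrite !IsetD //; split => [E|->] //.
apply/setP => x; move/setP: E => /(_ x); rewrite !inE.
case xC: (x \in C); rewrite ?andbT ?andbF //; by move/negb_inj.
Qed.

Lemma dLD_iff (C : {set V}) : is_LD KD C <->
  [/\ C != set0, forall u, u \notin C -> ~~ (C \subset closed_nbhd KC u) &
      forall u v, u \notin C -> v \notin C -> Iset KC C u = Iset KC C v -> u = v].
Proof.
split.
- move/LDP => [H1 H2 H3]; split => // [u uC|u v uC vC E].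
  + apply: contra (H2 u uC) => sub; rewrite IsetD // setD_eq0.
    by apply/subsetP => x xC; rewrite inE (subsetP sub) .
  + by apply: H3 => //; apply/sepDC.
- move=> [H1 H2 H3]; apply/LDP; split => // [u uC|u v uC vC E].
  + apply: contra (H2 u uC); rewrite IsetD // setD_eq0 => sub.
    by apply/subsetP => x /(subsetP sub); rewrite inE => /andP[].
  + by apply: H3 => //; apply/(sepDC uC vC).
Qed.

Lemma cLD_iff (C : {set V}) : is_LD KC C <->
  [/\ C != set0, forall u, u \notin C -> Iset KC C u != set0 &
      forall u v, u \notin C -> v \notin C -> Iset KC C u = Iset KC C v -> u = v].
Proof. by split => /LDP. Qed.

Lemma dLD_crit (D : {set V}) x0 : x0 \in D ->
  (forall u, u \notin D -> (forall p, p \in D -> (p.1 == u.1) || (p.2 == u.2)) -> False) ->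
  (forall u w, u \notin D -> w \notin D ->
     (forall p, p \in D -> ((p.1 == u.1) || (p.2 == u.2)) = ((p.1 == w.1) || (p.2 == w.2))) ->
     u = w) -> is_LD KD D.
Proof.
move=> x0D Hd Hs; apply/dLD_iff; split.
- by apply/set0Pn; exists x0.
- move=> u uD; apply/negP => sub; apply: (Hd u uD) => p pD.
  by rewrite -mem_Nc (subsetP sub).
- move=> u w uD wD E; apply: Hs => // p pD.
  by move/setP: E => /(_ p); rewrite /Iset !in_setI pD !andbT !mem_Nc.
Qed.
End S.


Lemma neq_rw (T : eqType) (x y : T) : x != y -> ((x == y) = false) * ((y == x) = false).
Proof. by move=> H; split; [|rewrite eq_sym]; apply: negbTE. Qed.

Ltac bsplit :=
  repeat match goal with
  | H : is_true (?x != ?x) |- _ => by rewrite eqxx in H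
  | H : is_true (?x != ?y) |- context [?x == ?y] => rewrite (negbTE H)
  | H : is_true (?x != ?y) |- context [?y == ?x] => rewrite (eq_sym y x) (negbTE H)
  | |- context [?x == ?x] => rewrite eqxx
  | |- context [ ?x == ?y ] => is_var x; is_var y;
      case: (eqVneq x y) => [?|?]; [subst x | ]
  end.


Ltac fin := simpl; repeat (let H := fresh in intro H; simpl in H; try discriminate;
   try (specialize (H isT)); simpl in H; try discriminate); try reflexivity.

Section S.
Variables n m : nat.
Local Notation V := ('I_n * 'I_m)%type.
Local Notation KC := (cartesian (@Kadj n) (@Kadj m)).
Local Notation KD := (direct (@Kadj n) (@Kadj m)).

Definition Cset (v p : V) : {set V} :=
  [set x : V | ((x.1 == v.1) || (x.2 == v.2)) && (x != v) && (x != p)].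

Ltac memD := rewrite ?in_setD1 ?in_setU1 ?inE /= ?xpair_eqE /=.

Lemma D1_LD (v1 : 'I_n) (v2 : 'I_m) a0 b1 r0 c0 :
  b1 != v2 -> r0 != v1 -> r0 != a0 -> (a0 != v1) ==> (c0 != v2) && (c0 != b1) ->
  is_LD KD ((((v1, v2) : V) |: Cset (v1, v2) (a0, v2)) :\ (v1, b1)).
Proof.
move=> Hb1 Hr1 Hr2 Hc; apply: (@dLD_crit _ _ _ (v1, v2)).
  by move: Hb1; memD; bsplit.
- move=> [u1 u2] uD H.
  have := H (r0, v2); have := H (v1, c0); have := H (v1,v2).
  move: uD Hb1 Hr1 Hr2 Hc; memD; clear H. by bsplit; fin.
- move=> [u1 u2] [w1 w2] uD wD H; apply/eqP; rewrite xpair_eqE /=.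
  have := H (r0, v2); have := H (v1, c0); have := H (v1,v2).
  have := H (u1, v2); have := H (w1, v2); have := H (v1, u2); have := H (v1, w2).
  move: uD wD Hc; memD; clear H. by bsplit; fin.
Qed.

Lemma D2_LD (v1 : 'I_n) (v2 : 'I_m) b0 a1 r0 c0 :
  a1 != v1 -> c0 != v2 -> c0 != b0 -> r0 != v1 -> r0 != a1 ->
  is_LD KD ((((v1, v2) : V) |: Cset (v1, v2) (v1, b0)) :\ (a1, v2)).
Proof.
move=> Ha1 Hc1 Hc2 Hr1 Hr2; apply: (@dLD_crit _ _ _ (v1, v2)).
  by memD; bsplit; fin.
- move=> [u1 u2] uD H.
  have := H (r0, v2); have := H (v1, c0); have := H (v1,v2).
  move: uD; memD; clear H. by bsplit; fin.
- move=> [u1 u2] [w1 w2] uD wD H; apply/eqP; rewrite xpair_eqE /=.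
  have := H (r0, v2); have := H (v1, c0); have := H (v1,v2).
  have := H (u1, v2); have := H (w1, v2); have := H (v1, u2); have := H (v1, w2).
  move: uD wD; memD; clear H. by bsplit; fin.
Qed.

Lemma D3_LD (v1 : 'I_n) (v2 : 'I_m) b0 a1 x c1 c2 :
  (forall r : 'I_n, (r == v1) || (r == a1)) ->
  a1 != v1 -> b0 != v2 -> x != v2 -> x != b0 -> c1 != v2 -> c1 != b0 -> c1 != x ->
  c2 != v2 -> c2 != b0 -> c2 != x -> c1 != c2 ->
  is_LD KD ((a1, x) |: (Cset (v1, v2) (v1, b0) :\ ((v1, x) : V))).
Proof.
move=> Hr Ha1 Hb0 Hx1 Hx2 H11 H12 H13 H21 H22 H23 Hc; apply: (@dLD_crit _ _ _ (a1, x)).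
  by memD; bsplit; fin.
- move=> [u1 u2] uD H.
  have := H (a1, x); have := H (a1, v2); have := H (v1, c1); have := H (v1, c2).
  have := Hr u1.
  move: uD; memD; clear H Hr. by bsplit; fin.
- move=> [u1 u2] [w1 w2] uD wD H; apply/eqP; rewrite xpair_eqE /=.
  have := H (a1, x); have := H (a1, v2); have := H (v1, c1); have := H (v1, c2).
  have := H (v1, u2); have := H (v1, w2); have := H (a1, u2); have := H (a1, w2).
  have := Hr u1; have := Hr w1.
  move: uD wD; memD; clear H Hr. by bsplit; fin.
Qed.
End S.


Lemma fresh k (s : seq 'I_k) : size s < k -> exists x, x \notin s.
Proof.
move=> hs; suff /existsP: [exists x, x \notin s] by [].
case: (boolP [exists x, x \notin s]) => // /existsPn H.
have: {subset enum 'I_k <= s} by move=> x _; move: (H x); rewrite negbK.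
move/(uniq_leq_size (enum_uniq _)); rewrite size_enum_ord => ks.
by move: (leq_trans hs ks); rewrite ltnn.

Qed.

Section S.
Variables n m : nat.
Local Notation V := ('I_n * 'I_m)%type.
Local Notation KC := (cartesian (@Kadj n) (@Kadj m)).
Local Notation KD := (direct (@Kadj n) (@Kadj m)).

Lemma notpt (C : {set V}) p y : p \notin C -> y \in C -> ~~ ((y.1 == p.1) && (y.2 == p.2)).
Proof.
move=> pC yC; apply/negP => /andP[/eqP e1 /eqP e2]; move: pC.
by rewrite [p]surjective_pairing -e1 -e2 -surjective_pairing yC.
Qed.

Lemma Cchar (C : {set V}) v1 v2 p :
  (forall y, y \in C -> ((y.1 == v1) || (y.2 == v2)) && (y != (v1, v2))) ->
  p \notin C ->
  (forall y : V, (y.1 == v1) || (y.2 == v2) -> y != (v1, v2) -> y != p -> y \in C) ->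
  C = Cset (v1, v2) p.
Proof.
move=> Hs pC H; apply/setP => y; rewrite inE /=.
case yC: (y \in C).
  by have /andP[-> ->] := Hs y yC; rewrite (contraNneq _ pC) // => <-.
apply/esym/negbTE/negP => /andP[/andP[h1 h2] h3].
by move: (H y h1 h2 h3); rewrite yC.
Qed.

Lemma structure (C : {set V}) (v1 : 'I_n) (v2 : 'I_m) :
  2 <= n -> 2 <= m -> is_LD KC C -> (v1, v2) \notin C ->
  C \subset closed_nbhd KC (v1, v2) ->
  (exists a0, C = Cset (v1, v2) (a0, v2)) \/
  (exists2 b0, b0 != v2 & C = Cset (v1, v2) (v1, b0)).
Proof.
move=> n2 m2 /cLD_iff[_ Hdom Hsep] vC sub.
have Hs : forall y, y \in C -> ((y.1 == v1) || (y.2 == v2)) && (y != (v1, v2)).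
  move=> y yC; apply/andP; split; first by have := subsetP sub y yC; rewrite mem_Nc.
  by apply: contraNneq vC => <-.
have offC : forall (a : 'I_n) (b : 'I_m), a != v1 -> b != v2 -> (a, b) \notin C.
  move=> a b av bv; apply/negP => /Hs /=; rewrite (negbTE av) (negbTE bv).
  by [].
have [b v2b] : exists b : 'I_m, b != v2.
  by have [b] := @fresh m [:: v2] m2; rewrite inE; exists b.
have [a v1a] : exists a : 'I_n, a != v1.
  by have [a] := @fresh n [:: v1] n2; rewrite inE; exists a.
case: (boolP [exists a, (a != v1) && ((a, v2) \notin C)]) =>
  [/existsP[a0 /andP[a0v1 a0C]] | /existsPn Pall];
case: (boolP [exists b, (b != v2) && ((v1, b) \notin C)]) =>
  [/existsP[b0 /andP[b0v2 b0C]] | /existsPn Qall].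
- exfalso; have /set0Pn[y] := Hdom _ (offC _ _ a0v1 b0v2).
  rewrite /Iset in_setI mem_Nc => /andP[yN yC].
  have := Hs y yC; have := notpt a0C yC; have := notpt b0C yC.
  move: yN; case: y {yC} => y1 y2 /=; rewrite xpair_eqE /=; bsplit; fin.
- have Pa : forall a, a != v1 -> a != a0 -> (a, v2) \in C.
    move=> a' av1 aa0; apply/negPn/negP => aC.
    have E : Iset KC C (a0, b) = Iset KC C (a', b).
      apply/setP => y; rewrite /Iset !in_setI !mem_Nc.
      case yC: (y \in C); rewrite ?andbF ?andbT //.
      have := Hs y yC; have := notpt a0C yC; have := notpt aC yC.
      case: y {yC} => y1 y2 /=; rewrite xpair_eqE /=; bsplit; fin.
    have [] := Hsep _ _ (offC _ _ a0v1 v2b) (offC _ _ av1 v2b) E.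
    by move=> e; move: aa0; rewrite e eqxx.
  left; exists a0; apply: Cchar => // [[y1 y2]] /= h1 h2 h3.
  case: (eqVneq y1 v1) => [e1|n1].
    subst y1; have := Qall y2; rewrite xpair_eqE eqxx /= in h2.
    by rewrite h2 /= negbK.
  move: h1; rewrite (negbTE n1) /= => /eqP e2; subst y2.
  by apply: Pa => //; move: h3; rewrite xpair_eqE eqxx andbT.
- have Qb : forall b, b != v2 -> b != b0 -> (v1, b) \in C.
    move=> b' bv2 bb0; apply/negPn/negP => bC.
    have E : Iset KC C (a, b0) = Iset KC C (a, b').
      apply/setP => y; rewrite /Iset !in_setI !mem_Nc.
      case yC: (y \in C); rewrite ?andbF ?andbT //.
      have := Hs y yC; have := notpt b0C yC; have := notpt bC yC.
      case: y {yC} => y1 y2 /=; rewrite xpair_eqE /=; bsplit; fin.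
    have [] := Hsep _ _ (offC _ _ v1a b0v2) (offC _ _ v1a bv2) E.
    by move=> e; move: bb0; rewrite e eqxx.
  right; exists b0 => //; apply: Cchar => // [[y1 y2]] /= h1 h2 h3.
  case: (eqVneq y2 v2) => [e2|n2'].
    subst y2; have := Pall y1; rewrite xpair_eqE eqxx /= andbT in h2.
    by rewrite h2 /= negbK.
  move: h1; rewrite (negbTE n2') orbF => /eqP e1; subst y1.
  by apply: Qb => //; move: h3; rewrite xpair_eqE eqxx.
- left; exists v1; apply: Cchar => // [[y1 y2]] /= h1 h2 h3.
  case: (eqVneq y1 v1) => [e1|n1].
    subst y1; have := Qall y2; rewrite xpair_eqE eqxx /= in h2.
    by rewrite h2 /= negbK.
  move: h1; rewrite (negbTE n1) /= => /eqP e2; subst y2.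
  by have := Pall y1; rewrite n1 /= negbK.
Qed.
End S.


Section S.
Variables n m : nat.
Local Notation V := ('I_n * 'I_m)%type.
Local Notation KC := (cartesian (@Kadj n) (@Kadj m)).
Local Notation KD := (direct (@Kadj n) (@Kadj m)).

Ltac memD := rewrite ?in_setD1 ?in_setU1 ?inE /= ?xpair_eqE /=.

Lemma exists_D (C : {set V}) : 2 <= n -> n <= m -> (n, m) <> (2, 4) ->
  is_LD KC C -> exists2 D, is_LD KD D & #|D| <= #|C|.
Proof.
move=> n2 nm nm24 HC.
case: (boolP [exists v, (v \notin C) && (C \subset closed_nbhd KC v)]) =>
   [/existsP[[v1 v2] /andP[vC sub]] | /existsPn Hno]; last first.
  exists C; last exact: leqnn; apply/dLD_iff; have /cLD_iff[H1 _ H3] := HC; split => // u uC.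
  by move: (Hno u); rewrite uC.
have m2 : 2 <= m by apply: leq_trans nm.
move: (HC) => /cLD_iff[_ Hdom Hsep].
have [b1 b1v2] : exists b : 'I_m, b != v2.
  by have [b] := @fresh m [:: v2] m2; rewrite inE; exists b.
have [a1 a1v1] : exists a : 'I_n, a != v1.
  by have [a] := @fresh n [:: v1] n2; rewrite inE; exists a.
case: (structure n2 m2 HC vC sub) => [[a0 EC] | [b0 b0v2 EC]].
- have n3 : a0 != v1 -> 2 < n.
    move=> na; rewrite ltn_neqAle n2 andbT; apply/negP => /eqP n2e.
    have Hr : forall r : 'I_n, (r == v1) || (r == a0).
      move=> r; rewrite !ordE; have := ltn_ord r; have := ltn_ord v1.
      have := ltn_ord a0; move: na n2e; rewrite ordE; lia.
    have uC : ((a0, v2) : V) \notin C by rewrite EC; memD; bsplit; fin.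
    have /set0Pn[y] := Hdom _ uC.
    rewrite /Iset in_setI mem_Nc EC.
    have := Hr y.1; case: y => y1 y2; memD; bsplit; fin.
  have [r0 [r0v1 r0a0]] : exists r0 : 'I_n, r0 != v1 /\ r0 != a0.
    case: (eqVneq a0 v1) => [e|na].
      by subst a0; exists a1.
    have [r] := @fresh n [:: v1; a0] (n3 na); rewrite !inE negb_or => /andP[h1 h2].
    by exists r.
  have [c0 Hc] : exists c0 : 'I_m, (a0 != v1) ==> (c0 != v2) && (c0 != b1).
    case: (eqVneq a0 v1) => [e|na]; first by exists b1.
    have [c] := @fresh m [:: v2; b1] (leq_trans (n3 na) nm).
    by rewrite !inE negb_or => h; exists c.
  exists ((((v1, v2) : V) |: Cset (v1, v2) (a0, v2)) :\ (v1, b1)).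
    exact: (@D1_LD n m v1 v2 a0 b1 r0 c0).
  have h1 : ((v1, b1) : V) \in ((v1, v2) : V) |: Cset (v1, v2) (a0, v2).
    by memD; bsplit; fin.
  have h2 : ((v1, v2) : V) \notin Cset (v1, v2) (a0, v2) by rewrite -EC.
  have e1 := cardsD1 ((v1, b1) : V) (((v1, v2) : V) |: Cset (v1, v2) (a0, v2)).
  have e2 := cardsU1 ((v1, v2) : V) (Cset (v1, v2) (a0, v2)).
  rewrite h1 add1n in e1; rewrite h2 add1n e1 in e2; by rewrite EC; case: e2 => ->.
- case: (ltnP 2 n) => [n3 | n2'].
  + have [r0] := @fresh n [:: v1; a1] n3; rewrite !inE negb_or => /andP[r0v1 r0a1].
    have [c0] := @fresh m [:: v2; b0] (leq_trans n3 nm).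
    rewrite !inE negb_or => /andP[c0v2 c0b0].
    exists ((((v1, v2) : V) |: Cset (v1, v2) (v1, b0)) :\ (a1, v2)).
      exact: (@D2_LD n m v1 v2 b0 a1 r0 c0).
    have h1 : ((a1, v2) : V) \in ((v1, v2) : V) |: Cset (v1, v2) (v1, b0).
      by memD; bsplit; fin.
    have h2 : ((v1, v2) : V) \notin Cset (v1, v2) (v1, b0) by rewrite -EC.
    have e1 := cardsD1 ((a1, v2) : V) (((v1, v2) : V) |: Cset (v1, v2) (v1, b0)).
    have e2 := cardsU1 ((v1, v2) : V) (Cset (v1, v2) (v1, b0)).
    rewrite h1 add1n in e1; rewrite h2 add1n e1 in e2; by rewrite EC; case: e2 => ->.
  + have n2e : n = 2 by apply/eqP; rewrite eqn_leq n2' n2.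
    have Hr : forall r : 'I_n, (r == v1) || (r == a1).
      move=> r; rewrite !ordE; have := ltn_ord r; have := ltn_ord v1.
      have := ltn_ord a1; move: a1v1 n2e; rewrite ordE; lia.
    case: (ltnP 2 m) => [m3 | m2']; last first.
      have m2e : m = 2 by apply/eqP; rewrite eqn_leq m2' m2.
      have Hc : forall c : 'I_m, (c == v2) || (c == b0).
        move=> c; rewrite !ordE; have := ltn_ord c; have := ltn_ord v2.
        have := ltn_ord b0; move: b0v2 m2e; rewrite ordE; lia.
      have uC : ((v1, b0) : V) \notin C by rewrite EC; memD; bsplit; fin.
      have /set0Pn[y] := Hdom _ uC.
      rewrite /Iset in_setI mem_Nc EC.
      have := Hc y.2; case: y => y1 y2; memD; bsplit; fin.
    have [x] := @fresh m [:: v2; b0] m3; rewrite !inE negb_or => /andP[xv2 xb0].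
    case: (ltnP 3 m) => [m4 | m3']; last first.
      have m3e : m = 3 by apply/eqP; rewrite eqn_leq m3' m3.
      have Hc : forall c : 'I_m, [|| c == v2, c == b0 | c == x].
        move=> c; rewrite !ordE; have := ltn_ord c; have := ltn_ord v2.
        have := ltn_ord b0; have := ltn_ord x; move: b0v2 xv2 xb0 m3e; rewrite !ordE; lia.
      have uC : ((a1, x) : V) \notin C by rewrite EC; memD; bsplit; fin.
      have E : Iset KC C (a1, x) = Iset KC C (v1, v2).
        apply/setP => y; rewrite /Iset !in_setI !mem_Nc EC.
        have := Hr y.1; have := Hc y.2; case: y => y1 y2; memD; bsplit; fin.
      have := congr1 fst (Hsep _ _ uC vC E); rewrite /= => e.
      by move: a1v1; rewrite e eqxx.
    case: (ltnP 4 m) => [m5 | m4']; last first.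
      by exfalso; apply: nm24; rewrite n2e; congr (_, _); apply/eqP; rewrite eqn_leq m4' m4.
    have [c1] := @fresh m [:: v2; b0; x] m4; rewrite !inE !negb_or => /and3P[c1v2 c1b0 c1x].
    have [c2] := @fresh m [:: v2; b0; x; c1] m5.
    rewrite !inE !negb_or => /and4P[c2v2 c2b0 c2x c2c1].
    exists ((a1, x) |: (Cset (v1, v2) (v1, b0) :\ ((v1, x) : V))).
      apply: (@D3_LD n m v1 v2 b0 a1 x c1 c2) => //; by rewrite eq_sym.
    have h1 : ((v1, x) : V) \in Cset (v1, v2) (v1, b0) by memD; bsplit; fin.
    have h2 : ((a1, x) : V) \notin Cset (v1, v2) (v1, b0) :\ ((v1, x) : V).
      by memD; bsplit; fin.
    have e1 := cardsD1 ((v1, x) : V) (Cset (v1, v2) (v1, b0)).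
    have e2 := cardsU1 ((a1, x) : V) (Cset (v1, v2) (v1, b0) :\ ((v1, x) : V)).
    rewrite h1 add1n in e1; rewrite h2 add1n -e1 in e2; by rewrite EC e2.
Qed.
End S.


Lemma LD_setT (T : finType) (e : rel T) (x : T) : is_LD e setT.
Proof.
apply/LDP; split; first by apply/set0Pn; exists x; rewrite inE.
  by move=> u; rewrite inE.
by move=> u v; rewrite inE.
Qed.

Section S.
Variables n m : nat.
Local Notation V := ('I_n * 'I_m)%type.
Local Notation KC := (cartesian (@Kadj n) (@Kadj m)).
Local Notation KD := (direct (@Kadj n) (@Kadj m)).

Lemma Iset_restr (e : rel V) (C : {set V}) u w :
  Iset e C w = Iset e (u |: C) w :&: C.
Proof.
apply/setP => y; rewrite /Iset !in_setI in_setU1.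
by case: (y \in C); rewrite ?orbT ?andbT ?andbF.
Qed.

Lemma cLD_from_dLD (C : {set V}) : is_LD KD C ->
  exists2 C', is_LD KC C' & #|C'| <= #|C| + 1.
Proof.
move/dLD_iff => [H1 H2 H3].
case: (boolP [exists u, (u \notin C) && (Iset KC C u == set0)]) =>
  [/existsP[u /andP[uC /eqP Iu]] | /existsPn Hn].
- exists (u |: C); last by rewrite cardsU1 uC addnC.
  apply/cLD_iff; split.
  + by apply/set0Pn; exists u; rewrite setU11.
  + move=> w; rewrite in_setU1 negb_or => /andP[wu wC].
    have : Iset KC C w != set0.
      apply/negP => /eqP Iw; move: wu.
      by rewrite (H3 _ _ wC uC (etrans Iw (esym Iu))) eqxx.
    case/set0Pn => y; rewrite /Iset !in_setI => /andP[yN yC].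
    by apply/set0Pn; exists y; rewrite /Iset in_setI yN in_setU1 yC orbT.
  + move=> w1 w2; rewrite !in_setU1 !negb_or => /andP[w1u w1C] /andP[w2u w2C] E.
    apply: H3 => //.
    by rewrite (Iset_restr _ _ u w1) (Iset_restr _ _ u w2) E.
- exists C; last by rewrite leq_addr.
  apply/cLD_iff; split => // w wC.
  by move: (Hn w); rewrite wC.
Qed.
End S.

Unset Implicit Arguments.

Theorem lemma14 (n m : nat) :
  2 <= n -> n <= m -> (n, m) <> (2, 4) ->
  let KnKm_c := cartesian (@Kadj n) (@Kadj m) in
  let KnKm_d := direct (@Kadj n) (@Kadj m) in
  [/\ gammaLD KnKm_c - 1 <= gammaLD KnKm_d,
      gammaLD KnKm_d <= gammaLD KnKm_c
    & gammaLD KnKm_d = gammaLD KnKm_c - 1 ->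
      forall C : {set 'I_n * 'I_m},
        is_LD KnKm_d C -> #|C| = gammaLD KnKm_d ->
        exists v, v \notin C /\ Iset KnKm_d C v = C].
Proof.
move=> n2 nm nm24; cbv zeta.
have m2 : 2 <= m by apply: leq_trans nm.
have x0 : ('I_n * 'I_m)%type.
  by split; [exact: (Ordinal (leq_trans (isT : 0 < 2) n2)) | exact: (Ordinal (leq_trans (isT : 0 < 2) m2))].
have LDc := LD_setT (cartesian (@Kadj n) (@Kadj m)) x0.
have LDd := LD_setT (direct (@Kadj n) (@Kadj m)) x0.
split.
- have [Cd HCd eCd] := gamma_att LDd.
  have [C' HC' le] := cLD_from_dLD HCd.
  have h := leq_trans (gamma_le HC') le; rewrite eCd in h.
  by rewrite leq_subLR add1n -addn1.
- have [Cc HCc eCc] := gamma_att LDc.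
  have [D HD le] := exists_D n2 nm nm24 HCc.
  have h := leq_trans (gamma_le HD) le; by rewrite eCc in h.
- move=> Heq C HC eC.
  case: (boolP [exists v, (v \notin C) && (Iset (direct (@Kadj n) (@Kadj m)) C v == C)]) =>
    [/existsP[v /andP[vC /eqP E]] | /existsPn Hn]; first by exists v.
  exfalso.
  have HcC : is_LD (cartesian (@Kadj n) (@Kadj m)) C.
    move/dLD_iff: HC => [H1 H2 H3]; apply/cLD_iff; split => // u uC.
    apply/negP => /eqP I0.
    by move: (Hn u); rewrite uC /= IsetD // I0 setD0 eqxx.
  have := gamma_pos LDc; have := gamma_le HcC; rewrite eC Heq.
  by case: (gammaLD _) => [|k] //=; rewrite subSS subn0 ltnn.
Qed.
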